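(* If $n\ge4$ and $h$ is odd with $h\ge\frac{3(n-1)}{n-3}$, then there exists $p\in\mathcal P$ such that $D_{\mu(p)}(p)=D_{\mu(p^r)}(p^r)=\{n\}$.
   Context: Let $n,h\ge2$ be integers, $N=\{1,\dots,n\}$, $H=\{1,\dots,h\}$. $\mathcal P$ is the set of $h$-tuples $p=(p_1,\dots,p_h)$ of linear orders on $N$; $p^r$ is obtained by reversing each $p_i$; $x>_{p_i}y$ means $x\ne y$ and $p_i$ ranks $x$ above $y$. For an integer $\mu$ with $h/2<\mu\le h$, $D_\mu(p)=\{x\in N: \forall y\in N,\ |\{i: y>_{p_i}x\}|<\mu\}$, and $\mu(p)=\min\{\mu\in\mathbb N\cap(h/2,h]: D_\mu(p)\neq\varnothing\}$. *)

(* Defs.v *)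
From mathcomp Require Import all_boot all_fingroup.
Set Implicit Arguments. Unset Strict Implicit. Unset Printing Implicit Defensive.

(* Alternatives N = {1,...,n} are encoded as 'I_n : paper's alternative k is
   the ordinal of value k-1.  A linear order on N is encoded as a bijection
   (permutation) from alternatives to positions: position 0 is the top. *)

Definition linord (n : nat) := {perm 'I_n}.
Definition profile (n h : nat) := 'I_h -> linord n.

Definition prefers n (o : linord n) (x y : 'I_n) : bool := (o x < o y)%N.

Definition rev_linord n (o : linord n) : linord n := (o * perm (@rev_ord_inj n))%g.
Definition rev_profile n h (p : profile n h) : profile n h :=
  fun i => rev_linord (p i).

Definition Dmu n h (mu : nat) (p : profile n h) : {set 'I_n} :=
  [set x | [forall y : 'I_n, #|[set i : 'I_h | prefers (p i) y x]| < mu]].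

(* mu(p) = least integer mu with h/2 < mu <= h and D_mu(p) nonempty
   (candidates h./2.+1, ..., h in increasing order; default h, never used since
   D_h(p) is always nonempty). *)
Definition mu_of n h (p : profile n h) : nat :=
  head h [seq m <- iota h./2.+1 (h - h./2) | Dmu m p != set0].

(* Main.v *)
Require Import Defs.
From mathcomp Require Import all_boot all_fingroup.
From mathcomp Require Import zify.
Set Implicit Arguments. Unset Strict Implicit. Unset Printing Implicit Defensive.

Lemma card_count h (P : nat -> bool) : #|[set i : 'I_h | P i]| = count P (iota 0 h).
Proof.
rewrite -val_enum_ord count_map cardE /enum_mem size_filter count_filter.
by apply: eq_count => i /=; rewrite !inE andbT.
Qed.

Section Rank.
Variable n : nat.
Variable f : nat -> nat.
Hypothesis finj : forall x y : 'I_n, f x = f y -> x = y.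

Definition rset (x : 'I_n) := [set y : 'I_n | f y < f x].

Lemma rset_proper (x y : 'I_n) : f y < f x -> rset y \proper rset x.
Proof.
move=> lt; apply/properP; split.
  by apply/subsetP=> u; rewrite !inE => h; exact: ltn_trans h lt.
by exists y; rewrite !inE ?lt // ltnn.
Qed.

Lemma rank_lt x : #|rset x| < n.
Proof.
have: rset x \proper [set: 'I_n].
  apply/properP; split; first exact: subsetT.
  by exists x; rewrite !inE ?ltnn.
by move/proper_card; rewrite cardsT card_ord.
Qed.

Definition rk (x : 'I_n) : 'I_n := Ordinal (rank_lt x).

Lemma rk_mono (x y : 'I_n) : f y < f x -> rk y < rk x.
Proof. by move/rset_proper/proper_card. Qed.

Lemma rk_lt (x y : 'I_n) : (rk y < rk x) = (f y < f x).
Proof.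
case: (ltngtP (f y) (f x)) => h.
- by rewrite rk_mono.
- by apply/negbTE; rewrite -leqNgt ltnW // rk_mono.
- by rewrite (finj h) ltnn.
Qed.

Lemma rk_inj : injective rk.
Proof.
move=> x y e.
case: (ltngtP (f y) (f x)) => h.
- by move: (rk_mono h); rewrite e ltnn.
- by move: (rk_mono h); rewrite e ltnn.
- exact: esym (finj h).
Qed.

Definition mkord : linord n := perm rk_inj.

Lemma prefers_mkord (x y : 'I_n) : prefers mkord y x = (f y < f x).
Proof. by rewrite /prefers !permE rk_lt. Qed.
End Rank.

Lemma prefers_rev n (o : linord n) y x : prefers (rev_linord o) y x = prefers o x y.
Proof.
rewrite /prefers /rev_linord !permM !permE /=.
have := ltn_ord (o x); have := ltn_ord (o y).
by move=> a b; apply/idP/idP; lia.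
Qed.

Lemma hf (P : pred nat) s x d : sorted leq s -> x \in s -> P x ->
  P (head d (filter P s)) /\ head d (filter P s) <= x.
Proof.
elim: s => [//|a s IH] /= srt.
rewrite inE => /orP [/eqP ->|xs] Px.
  by rewrite Px.
case: ifP => Pa /=.
  split=> //.
  have := order_path_min leq_trans srt.
  by move/allP/(_ x xs).
by apply: IH => //; exact: path_sorted srt.
Qed.

Lemma good_mu n h (p : profile n h) (z : 'I_n) (M : nat) :
  (exists x, x != z) -> h./2 <= M ->
  (forall y, #|[set i | prefers (p i) y z]| <= M) ->
  (forall x, x != z -> exists y, M < #|[set i | prefers (p i) y x]|) ->
  Dmu (mu_of p) p = [set z].
Proof.
move=> [x0 x0z] kM Hz Hx.
have Mh : M < h.
  have [y Hy] := Hx _ x0z.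
  apply: (leq_trans Hy); have := max_card [set i | prefers (p i) y x0].
  by rewrite card_ord.
pose P := fun mu => Dmu mu p != set0.
have zin : z \in Dmu M.+1 p.
  by rewrite inE; apply/forallP => y; rewrite ltnS.
have PM : P M.+1 by apply/set0Pn; exists z.
have Min : M.+1 \in iota h./2.+1 (h - h./2).
  rewrite mem_iota; apply/andP; split; first by rewrite ltnS.
  have : h./2 <= h by rewrite -{2}(odd_double_half h); lia.
  lia.
have [Pm mle] := hf h (iota_sorted _ _) Min PM.
rewrite /mu_of.
set mu := head _ _ in Pm mle *. clearbody mu.
have sub : Dmu mu p \subset [set z].
  apply/subsetP => x; rewrite inE => /forallP Hxx.
  rewrite inE; apply/negPn/negP => xz.
  have [y Hy] := Hx _ xz.
  by have := leq_trans (Hxx y) mle; rewrite ltnS leqNgt Hy.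
case/set0Pn: Pm => w win.
apply/eqP; rewrite eqEsubset sub /=.
have := subsetP sub _ win; rewrite inE => /eqP <-.
by rewrite sub1set.
Qed.

Definition bkey (T : seq (seq nat)) j x := index x (nth [::] T j).
Definition c0 T h0 a c := count (fun j => bkey T j a < bkey T j c) (iota 0 h0).

Section Ext.
Variables (T : seq (seq nat)) (n0 h0 n d : nat).
Hypothesis n0ge : 2 <= n0.
Hypothesis n0n : n0 <= n.
Hypothesis Hrow : forall j a, j < h0 -> a < n0 -> a \in nth [::] T j.

Definition bm x := if x == n.-1 then n0.-1 else if x < n0.-1 then x else 0.
Definition off x := if (x < n0.-1) || (x == n.-1) then 0 else x.
Definition key j x := if j < h0 then n * bkey T j (bm x) + off x
                      else if odd j then x else n - x.
Definition em a := if a == n0.-1 then n.-1 else a.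
Definition cnt y x := count (fun j => key j y < key j x) (iota 0 (h0 + d.*2)).

Lemma bm_lt x : x < n -> bm x < n0.
Proof. rewrite /bm; case: ifP => [_|_]; [lia|case: ifP; lia]. Qed.

Lemma off_lt x : x < n -> off x < n.
Proof. rewrite /off; case: ifP; lia. Qed.

Lemma bm_z : bm n.-1 = n0.-1.
Proof. by rewrite /bm eqxx. Qed.

Lemma bm_ltz x : x < n.-1 -> bm x < n0.-1.
Proof. rewrite /bm; case: ifP => [/eqP|_]; first lia. case: ifP; lia. Qed.

Lemma em_ok a : a < n0 -> em a < n /\ bm (em a) = a.
Proof.
rewrite /em; case: ifP => [/eqP ->|na] an.
  by split; [lia | rewrite bm_z].
split; first lia.
rewrite /bm; case: ifP => [/eqP|_]; first lia.
case: ifP => //; lia.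
Qed.

Lemma divmod_eq a c u v : u < n -> v < n -> n * a + u = n * c + v -> a = c /\ u = v.
Proof.
move=> un vn e.
have ha : (n * a + u) %/ n = a by rewrite mulnC divnMDl ?divn_small //; lia.
have hc : (n * c + v) %/ n = c by rewrite mulnC divnMDl ?divn_small //; lia.
have ea : a = c by rewrite -ha -hc e.
by subst; split=> //; lia.
Qed.

Lemma bkey_inj j a c : j < h0 -> a < n0 -> c < n0 -> bkey T j a = bkey T j c -> a = c.
Proof.
move=> jh an cn e.
by have := congr1 (nth 0 (nth [::] T j)) e; rewrite /bkey !nth_index //; apply: Hrow.
Qed.

Lemma key_inj j x y : x < n -> y < n -> key j x = key j y -> x = y.
Proof.
move=> xn yn; rewrite /key; case: ifP => jh.
  move/(divmod_eq (off_lt xn) (off_lt yn)) => [/(bkey_inj jh (bm_lt xn) (bm_lt yn)) eb eo].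
  move: eb eo; rewrite /bm /off.
  by repeat (case: ifP => /= ?); lia.
case: ifP => _; lia.
Qed.

Lemma key_lt j x y : j < h0 -> x < n -> y < n -> bm x != bm y ->
  (key j y < key j x) = (bkey T j (bm y) < bkey T j (bm x)).
Proof.
move=> jh xn yn nb.
have ne : bkey T j (bm y) != bkey T j (bm x).
  apply/eqP => /(bkey_inj jh (bm_lt yn) (bm_lt xn)) e.
  by move: nb; rewrite e eqxx.
rewrite /key jh.
have := off_lt xn; have := off_lt yn.
move: ne; set a := bkey T j (bm y); set c := bkey T j (bm x).
move=> ne u v.
case: (ltngtP a c) => hac.
- apply/idP; rewrite ltnNge; apply/negP => H.
  have : n * a.+1 <= n * c by rewrite leq_mul2l hac orbT.
  rewrite mulnS; lia.
- apply/negbTE; rewrite -leqNgt.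
  have : n * c.+1 <= n * a by rewrite leq_mul2l hac orbT.
  rewrite mulnS; lia.
- by rewrite hac eqxx in ne.
Qed.

Lemma count_pairs x y : x < n -> y < n -> x != y -> forall e,
  count (fun j => key j y < key j x) (iota h0 e.*2) = e.
Proof.
move=> xn yn nxy; elim=> [//|e IH].
rewrite doubleS -addn2 iotaD count_cat IH /= /key.
have -> : (h0 + e.*2 < h0) = false by lia.
have -> : (h0 + e.*2).+1 < h0 = false by lia.
rewrite addn0 oddS.
case: (odd (h0 + e.*2)) => /=;
case: (ltngtP y x) => hh; try (by move: nxy; rewrite hh eqxx);
repeat (case: ifP => ?); lia.
Qed.

Lemma cnt_eq x y : x < n -> y < n -> bm x != bm y ->
  cnt y x = c0 T h0 (bm y) (bm x) + d.
Proof.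
move=> xn yn nb.
have nxy : x != y by apply: contraNneq nb => ->.
rewrite /cnt iotaD count_cat add0n count_pairs //.
congr (_ + _); apply: eq_in_count => j; rewrite mem_iota => /andP [_ jh].
exact: key_lt.
Qed.

Lemma cnt_xx x : cnt x x = 0.
Proof. by rewrite /cnt; apply/eqP; rewrite -leqn0 leqNgt -has_count; apply/hasPn => j _; rewrite ltnn. Qed.

Lemma c0_xx a : c0 T h0 a a = 0.
Proof. by rewrite /c0; apply/eqP; rewrite -leqn0 leqNgt -has_count; apply/hasPn => j _; rewrite ltnn. Qed.

End Ext.

Lemma lift (c c0' : nat -> nat -> nat) n0 n d M0 (b e : nat -> nat) :
  0 < n ->
  b n.-1 = n0.-1 ->
  (forall x, x < n.-1 -> b x < n0.-1) ->
  (forall a, a < n0 -> e a < n /\ b (e a) = a) ->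
  (forall a, c0' a a = 0) -> c n.-1 n.-1 = 0 ->
  (forall x y, x < n -> y < n -> b x != b y -> c y x = c0' (b y) (b x) + d) ->
  (forall a, a < n0 -> c0' a n0.-1 <= M0) ->
  (forall x, x < n0.-1 -> exists2 a, a < n0 & M0 < c0' a x) ->
  (forall y, y < n -> c y n.-1 <= M0 + d) /\
  (forall x, x < n.-1 -> exists2 y, y < n & M0 + d < c y x).
Proof.
move=> npos bz blt eok c00 czz H1 Hz Hx; split.
  move=> y yn; case: (ltngtP y n.-1) => hy.
  - have := blt _ hy => hb.
    rewrite H1 //; last by rewrite bz; apply/eqP => ee; move: hb; rewrite ee ltnn.
    + rewrite bz leq_add2r; apply: Hz; lia.
    + lia.
  - lia.
  - by rewrite hy czz.
move=> x xn.
have hb := blt _ xn.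
have [a an Ha] := Hx _ hb.
have [ean eb] := eok _ an.
have nb : b x != b (e a).
  by rewrite eb; apply/eqP => ea; move: Ha; rewrite -ea c00.
exists (e a) => //.
rewrite H1 // ?eb; [lia|lia].
Qed.

Definition basechk (c : nat -> nat -> nat) n0 M0 :=
  all (fun a => c a n0.-1 <= M0) (iota 0 n0) &&
  all (fun x => has (fun a => M0 < c a x) (iota 0 n0)) (iota 0 n0.-1).

Lemma basechkP c n0 M0 : basechk c n0 M0 ->
  (forall a, a < n0 -> c a n0.-1 <= M0) /\
  (forall x, x < n0.-1 -> exists2 a, a < n0 & M0 < c a x).
Proof.
case/andP => /allP H1 /allP H2; split.
  by move=> a an; apply: H1; rewrite mem_iota.
move=> x xn; have xi : x \in iota 0 n0.-1 by rewrite mem_iota.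
have /hasP [a ain Ha] := H2 x xi.
by exists a => //; move: ain; rewrite mem_iota.
Qed.

Lemma half_dbl h0 d : (h0 + d.*2)./2 = h0./2 + d.
Proof.
elim: d => [|d IH]; first by rewrite double0 !addn0.
by rewrite doubleS !addnS /= IH; lia.
Qed.

Lemma from_base T n0 h0 M0 M1 n d :
  2 <= n0 -> n0 <= n ->
  all (fun j => all (fun a => a \in nth [::] T j) (iota 0 n0)) (iota 0 h0) ->
  h0./2 <= M0 -> h0./2 <= M1 ->
  basechk (c0 T h0) n0 M0 -> basechk (fun a c => c0 T h0 c a) n0 M1 ->
  exists p : profile n (h0 + d.*2),
    Dmu (mu_of p) p = [set x : 'I_n | val x == n.-1] /\
    Dmu (mu_of (rev_profile p)) (rev_profile p) = [set x : 'I_n | val x == n.-1].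
Proof.
move=> n0ge n0n /allP Hrows k0 k1 /basechkP [B1 B2] /basechkP [B3 B4].
have Hrow : forall j a, j < h0 -> a < n0 -> a \in nth [::] T j.
  move=> j a jh an; have ji : j \in iota 0 h0 by rewrite mem_iota.
  have /allP := Hrows j ji.
  by apply; rewrite mem_iota.
have finj : forall (i : 'I_(h0 + d.*2)) (x y : 'I_n),
    key T n0 h0 n i x = key T n0 h0 n i y -> x = y.
  move=> i x y e; apply: val_inj.
  exact: (key_inj n0ge n0n Hrow (ltn_ord x) (ltn_ord y) e).
pose p : profile n (h0 + d.*2) := fun i => mkord (finj i).
exists p.
have nz : n.-1 < n by lia.
pose z : 'I_n := Ordinal nz.
have zset : [set x : 'I_n | val x == n.-1] = [set z].
  by apply/setP => x; rewrite !inE.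
have ex : exists x : 'I_n, x != z.
  have n0' : 0 < n by lia.
  exists (Ordinal n0'); apply/eqP => /(congr1 val) /=; lia.
have cardE1 : forall y x : 'I_n,
    #|[set i | prefers (p i) y x]| = cnt T n0 h0 n d y x.
  move=> y x.
  have -> : [set i | prefers (p i) y x] = [set i : 'I_(h0 + d.*2) | key T n0 h0 n i y < key T n0 h0 n i x].
    by apply/setP => i; rewrite !inE /p prefers_mkord.
  exact: (card_count _ (fun j => key T n0 h0 n j y < key T n0 h0 n j x)).
have cardE2 : forall y x : 'I_n,
    #|[set i | prefers (rev_profile p i) y x]| = cnt T n0 h0 n d x y.
  by move=> y x; rewrite -cardE1; apply: eq_card => i; rewrite !inE prefers_rev.
have n0pos : 0 < n by lia.
have bz := bm_z n0 n.
have blt := bm_ltz n0ge n0n.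
have eok := em_ok n0ge n0n.
have H1 : forall x y, x < n -> y < n -> bm n0 n x != bm n0 n y ->
    cnt T n0 h0 n d y x = c0 T h0 (bm n0 n y) (bm n0 n x) + d.
  by move=> x y xn yn nb; apply: cnt_eq.
have [L1 L2] := lift (c := cnt T n0 h0 n d) n0pos bz blt eok (c0_xx T h0) (cnt_xx T n0 h0 n d n.-1) H1 B1 B2.
have H1' : forall x y, x < n -> y < n -> bm n0 n x != bm n0 n y ->
    cnt T n0 h0 n d x y = c0 T h0 (bm n0 n x) (bm n0 n y) + d.
  by move=> x y xn yn nb; apply: H1; rewrite // eq_sym.
have [L3 L4] := lift (c := fun a c => cnt T n0 h0 n d c a) (c0' := fun a c => c0 T h0 c a)
   n0pos bz blt eok (c0_xx T h0) (cnt_xx T n0 h0 n d n.-1)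
   H1' B3 B4.
rewrite zset; split; [apply: (good_mu (M := M0 + d)) ex _ _ _ | apply: (good_mu (M := M1 + d)) ex _ _ _].
- by rewrite half_dbl leq_add2r.
- by move=> y; rewrite cardE1; apply: L1.
- move=> x xz.
  have xlt : x < n.-1.
    have := ltn_ord x; move: xz; rewrite -val_eqE /= => xz; lia.
  have [y yn Hy] := L2 _ xlt.
  by exists (Ordinal yn); rewrite cardE1.
- by rewrite half_dbl leq_add2r.
- by move=> y; rewrite cardE2; apply: L3.
- move=> x xz.
  have xlt : x < n.-1.
    have := ltn_ord x; move: xz; rewrite -val_eqE /= => xz; lia.
  have [y yn Hy] := L4 _ xlt.
  by exists (Ordinal yn); rewrite cardE2.
Qed.

Definition TA : seq (seq nat) := [:: [:: 3;0;1;2]; [:: 3;1;2;0]; [:: 3;2;0;1]; [:: 3;0;1;2]; [:: 3;1;2;0];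
  [:: 2;0;1;3]; [:: 0;1;2;3]; [:: 1;2;0;3]; [:: 2;0;1;3]].
Definition TB : seq (seq nat) := [:: [:: 4;0;1;2;3]; [:: 4;1;2;3;0]; [:: 4;2;3;0;1]; [:: 4;3;0;1;2];
  [:: 0;1;2;3;4]; [:: 1;2;3;0;4]; [:: 2;3;0;1;4]].
Definition TC : seq (seq nat) := [:: [:: 5;0;1;2;3;4]; [:: 5;1;2;3;4;0]; [:: 5;2;3;4;0;1];
  [:: 3;4;0;1;2;5]; [:: 4;0;1;2;3;5]].

Lemma split_h h h0 : odd h -> odd h0 -> h0 <= h -> exists d, h = h0 + d.*2.
Proof.
move=> oh oh0 le; exists (h - h0)./2.
have := odd_double_half (h - h0).
rewrite oddB // oh oh0 /= add0n => e; lia.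
Qed.

Theorem proposition8 (n h : nat) :
  (4 <= n)%N -> (2 <= h)%N -> odd h -> (3 * (n - 1) <= h * (n - 3))%N ->
  exists p : profile n h,
    Dmu (mu_of p) p = [set x : 'I_n | val x == n.-1] /\
    Dmu (mu_of (rev_profile p)) (rev_profile p) = [set x : 'I_n | val x == n.-1].
Proof.
move=> n4 h2 oh hyp.
case: (leqP 9 h) => h9.
  have [d ->] := split_h oh (isT : odd 9) h9.
  by apply: (@from_base TA 4 9 4 5) => //; vm_compute.
case: (leqP 7 h) => h7.
  have e7 : h = 7.
    have : h != 8 by apply/eqP => e; rewrite e in oh.
    lia.
  subst h.
  have n5 : 5 <= n by lia.
  have -> : 7 = 7 + 0.*2 by [].
  by apply: (@from_base TB 5 7 3 4) => //; vm_compute.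
have e5 : h = 5.
  have : h != 6 by apply/eqP => e; rewrite e in oh.
  have : h != 4 by apply/eqP => e; rewrite e in oh.
  have : h != 2 by apply/eqP => e; rewrite e in oh.
  have : h != 3 by apply/eqP => e; rewrite e in hyp; lia.
  lia.
subst h.
have n6 : 6 <= n by lia.
have -> : 5 = 5 + 0.*2 by [].
by apply: (@from_base TC 6 5 2 3) => //; vm_compute.
Qed.
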